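(* $\mathsf{ACA}_0$ proves $\mathsf{EM}_\infty$.
   Context: $\mathbb{N}$ denotes the first-order universe. A coloring $c:[S]^2\to\mathbb{N}$ is \emph{transitive} if for all $x<y<z$ in $S$ with $c(x,y)=c(y,z)$ we have $c(x,z)=c(x,y)$. $\mathsf{EM}_\infty$: for every coloring $c:[\mathbb{N}]^2\to\mathbb{N}$ there is an infinite set $S$ such that $c\upharpoonright[S]^2$ is transitive. *)

(* Defs.v *)
(* We formalize "ACA_0 proves EM_infinity" semantically: by Goedel's
   completeness theorem for (two-sorted, Henkin-semantics) second-order
   arithmetic, ACA_0 |- phi iff phi holds in every L_2-structure satisfying
   the axioms of ACA_0. *)

Set Implicit Arguments.

Record L2structure := {
  num : Type;
  sets : Type;
  zero : num;
  one : num;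
  add : num -> num -> num;
  mul : num -> num -> num;
  lt : num -> num -> Prop;
  mem : num -> sets -> Prop
}.

(** * Syntax of L_2 (de Bruijn indices; number and set variables separate) *)
Inductive term : Type :=
  | tvar : nat -> term
  | tzero : term
  | tone : term
  | tadd : term -> term -> term
  | tmul : term -> term -> term.

Inductive formula : Type :=
  | feq : term -> term -> formula
  | flt : term -> term -> formula
  | fmem : term -> nat -> formula
  | fnot : formula -> formula
  | fand : formula -> formula -> formula
  | for_ : formula -> formula -> formula
  | fimp : formula -> formula -> formula
  | fall : formula -> formula
  | fex : formula -> formula
  | fallS : formula -> formula
  | fexS : formula -> formula.

Fixpoint arithmetical (f : formula) : Prop :=
  match f with
  | feq _ _ | flt _ _ | fmem _ _ => True
  | fnot g | fall g | fex g => arithmetical g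
  | fand g h | for_ g h | fimp g h => arithmetical g /\ arithmetical h
  | fallS _ | fexS _ => False
  end.

Definition scons {A : Type} (a : A) (e : nat -> A) : nat -> A :=
  fun n => match n with 0 => a | S k => e k end.

Section Semantics.
Variable A : L2structure.

Fixpoint teval (e : nat -> num A) (t : term) : num A :=
  match t with
  | tvar n => e n
  | tzero => zero A
  | tone => one A
  | tadd u v => add A (teval e u) (teval e v)
  | tmul u v => mul A (teval e u) (teval e v)
  end.

Fixpoint sat (e : nat -> num A) (E : nat -> sets A) (f : formula) : Prop :=
  match f with
  | feq u v => teval e u = teval e v
  | flt u v => lt A (teval e u) (teval e v)
  | fmem u i => mem A (teval e u) (E i)
  | fnot g => ~ sat e E g
  | fand g h => sat e E g /\ sat e E h
  | for_ g h => sat e E g \/ sat e E h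
  | fimp g h => sat e E g -> sat e E h
  | fall g => forall m : num A, sat (scons m e) E g
  | fex g => exists m : num A, sat (scons m e) E g
  | fallS g => forall X : sets A, sat e (scons X E) g
  | fexS g => exists X : sets A, sat e (scons X E) g
  end.

Definition basic_axioms : Prop :=
  (forall n : num A, add A n (one A) <> zero A) /\
  (forall m n : num A, add A m (one A) = add A n (one A) -> m = n) /\
  (forall m : num A, add A m (zero A) = m) /\
  (forall m n : num A, add A m (add A n (one A)) = add A (add A m n) (one A)) /\
  (forall m : num A, mul A m (zero A) = zero A) /\
  (forall m n : num A, mul A m (add A n (one A)) = add A (mul A m n) m) /\
  (forall m : num A, ~ lt A m (zero A)) /\
  (forall m n : num A, lt A m (add A n (one A)) <-> (lt A m n \/ m = n)).

Definition induction_axiom : Prop :=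
  forall X : sets A,
    mem A (zero A) X ->
    (forall n : num A, mem A n X -> mem A (add A n (one A)) X) ->
    forall n : num A, mem A n X.

(** Arithmetical comprehension: for every arithmetical formula phi(n)
    (with arbitrary number and set parameters; variable 0 is n),
    exists X forall n (n ∈ X <-> phi(n)).  X does not occur in phi. *)
Definition arithmetical_comprehension : Prop :=
  forall (phi : formula), arithmetical phi ->
  forall (e : nat -> num A) (E : nat -> sets A),
    exists X : sets A, forall n : num A, mem A n X <-> sat (scons n e) E phi.

Definition ACA0_model : Prop :=
  basic_axioms /\ induction_axiom /\ arithmetical_comprehension.

Definition pair (i j : num A) : num A :=
  add A (mul A (add A i j) (add A i j)) i.

(** A set C codes a coloring c : [N]^2 -> N: C is a set of pairs ((x,y),k)
    with x < y, and for each x < y there is exactly one k with ((x,y),k) ∈ C. *)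
Definition is_coloring (C : sets A) : Prop :=
  (forall p : num A, mem A p C ->
     exists x y k : num A, lt A x y /\ p = pair (pair x y) k) /\
  (forall x y : num A, lt A x y -> exists k : num A, mem A (pair (pair x y) k) C) /\
  (forall x y k k' : num A, lt A x y ->
     mem A (pair (pair x y) k) C -> mem A (pair (pair x y) k') C -> k = k').

Definition infinite_set (S : sets A) : Prop :=
  forall n : num A, exists m : num A, lt A n m /\ mem A m S.

Definition transitive_on (C S : sets A) : Prop :=
  forall x y z k : num A,
    mem A x S -> mem A y S -> mem A z S -> lt A x y -> lt A y z ->
    mem A (pair (pair x y) k) C -> mem A (pair (pair y z) k) C ->
    mem A (pair (pair x z) k) C.

Definition EM_infinity : Prop :=
  forall C : sets A, is_coloring C ->
    exists S : sets A, infinite_set S /\ transitive_on C S.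

End Semantics.

(* Main.v *)
Require Import Defs.
From Stdlib Require Import Setoid Ring Classical PeanoNat.

Section Model.
Variable A : L2structure.
Hypothesis HA : ACA0_model A.
Variable C : sets A.

Local Notation N := (num A).
Local Infix "⊕" := (add A) (at level 50, left associativity).
Local Infix "⊗" := (mul A) (at level 40, left associativity).
Local Infix "≺" := (lt A) (at level 70).
Local Notation zz := (zero A).
Local Notation oo := (one A).

Definition E0 : nat -> sets A := fun _ => C.

Definition Def1 (Q : N -> Prop) : Prop :=
  exists (e : nat -> N) (phi : formula),
    (forall n, Q n <-> sat A (scons n e) E0 phi) /\ arithmetical phi.

Lemma r_and env P Q f g : (P <-> sat A env E0 f) -> (Q <-> sat A env E0 g) ->
  (P /\ Q <-> sat A env E0 (fand f g)).
Proof. simpl; tauto. Qed.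
Lemma r_or env P Q f g : (P <-> sat A env E0 f) -> (Q <-> sat A env E0 g) ->
  (P \/ Q <-> sat A env E0 (for_ f g)).
Proof. simpl; tauto. Qed.
Lemma r_imp env P Q f g : (P <-> sat A env E0 f) -> (Q <-> sat A env E0 g) ->
  ((P -> Q) <-> sat A env E0 (fimp f g)).
Proof. simpl; tauto. Qed.
Lemma r_iff env P Q f g : (P <-> sat A env E0 f) -> (Q <-> sat A env E0 g) ->
  ((P <-> Q) <-> sat A env E0 (fand (fimp f g) (fimp g f))).
Proof. simpl; tauto. Qed.
Lemma r_not env P f : (P <-> sat A env E0 f) -> (~ P <-> sat A env E0 (fnot f)).
Proof. simpl; tauto. Qed.
Lemma r_false env : (False <-> sat A env E0 (fnot (feq tzero tzero))).
Proof. simpl; tauto. Qed.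
Lemma r_all env (P : N -> Prop) f : (forall m, P m <-> sat A (scons m env) E0 f) ->
  ((forall m, P m) <-> sat A env E0 (fall f)).
Proof. simpl; intro H; split; intros H1 m; apply H; auto. Qed.
Lemma r_ex env (P : N -> Prop) f : (forall m, P m <-> sat A (scons m env) E0 f) ->
  ((exists m, P m) <-> sat A env E0 (fex f)).
Proof. simpl; intro H; split; intros [m Hm]; exists m; apply H; auto. Qed.
Lemma r_eq env t u : (teval A env t = teval A env u) <-> sat A env E0 (feq t u).
Proof. simpl; tauto. Qed.
Lemma r_lt env t u : (lt A (teval A env t) (teval A env u)) <-> sat A env E0 (flt t u).
Proof. simpl; tauto. Qed.
Lemma r_mem env t : (mem A (teval A env t) C) <-> sat A env E0 (fmem t 0).
Proof. simpl; tauto. Qed.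

Definition tpair (t u : term) : term := tadd (tmul (tadd t u) (tadd t u)) t.



Ltac lookup env x :=
  lazymatch env with
  | scons x _ => constr:(0)
  | scons _ ?r => let k := lookup r x in constr:(S k)
  | _ => fail 100 "reify: unknown atom" x
  end.

Ltac reify_term env x :=
  lazymatch x with
  | add _ ?a ?b => let ta := reify_term env a in let tb := reify_term env b in constr:(tadd ta tb)
  | mul _ ?a ?b => let ta := reify_term env a in let tb := reify_term env b in constr:(tmul ta tb)
  | pair _ ?a ?b => let ta := reify_term env a in let tb := reify_term env b in constr:(tpair ta tb)
  | zero _ => constr:(tzero)
  | one _ => constr:(tone)
  | _ => let k := lookup env x in constr:(tvar k)
  end.

Ltac reify_iff :=
  lazymatch goal with
  | |- (?P /\ ?Q) <-> sat _ _ _ _ => apply r_and; [reify_iff | reify_iff]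
  | |- (?P \/ ?Q) <-> sat _ _ _ _ => apply r_or; [reify_iff | reify_iff]
  | |- (?P <-> ?Q) <-> sat _ _ _ _ => apply r_iff; [reify_iff | reify_iff]
  | |- (~ ?P) <-> sat _ _ _ _ => apply r_not; reify_iff
  | |- False <-> sat _ _ _ _ => apply r_false
  | |- (?P -> ?Q) <-> sat _ _ _ _ => apply r_imp; [reify_iff | reify_iff]
  | |- (forall m : num _, _) <-> sat _ _ _ _ =>
      apply r_all; let m := fresh "m" in intro m; cbv beta; reify_iff
  | |- (exists m : num _, _) <-> sat _ _ _ _ =>
      apply r_ex; let m := fresh "m" in intro m; cbv beta; reify_iff
  | |- (@eq (num _) ?x ?y) <-> sat _ ?env _ _ =>
      let t := reify_term env x in let u := reify_term env y in
      exact (r_eq env t u)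
  | |- (lt _ ?x ?y) <-> sat _ ?env _ _ =>
      let t := reify_term env x in let u := reify_term env y in
      exact (r_lt env t u)
  | |- (mem _ ?x _) <-> sat _ ?env _ _ =>
      let t := reify_term env x in
      exact (r_mem env t)
  | |- ?P <-> _ =>
      let P' := eval red in P in
      tryif constr_eq P P' then fail 100 "reify: cannot handle" P
      else (change P with P'; reify_iff)
  end.

Ltac mkenv acc :=
  match goal with
  | x : num _ |- _ =>
      lazymatch acc with
      | context [x] => fail
      | _ => mkenv (scons x acc)
      end
  | _ => acc
  end.

Ltac dfn :=
  lazymatch goal with
  | |- Def1 ?Q =>
    let env := mkenv (fun _ : nat => zz) in
    exists env; eexists; split;
    [ let n := fresh "n" in intro n; cbv beta; reify_iff
    | cbn; tauto ]
  end.


Fixpoint tlift (c : nat) (t : term) : term :=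
  match t with
  | tvar n => if Nat.ltb n c then tvar n else tvar (S n)
  | tzero => tzero
  | tone => tone
  | tadd u v => tadd (tlift c u) (tlift c v)
  | tmul u v => tmul (tlift c u) (tlift c v)
  end.

Fixpoint flift (c : nat) (f : formula) : formula :=
  match f with
  | feq t u => feq (tlift c t) (tlift c u)
  | flt t u => flt (tlift c t) (tlift c u)
  | fmem t i => fmem (tlift c t) i
  | fnot g => fnot (flift c g)
  | fand g h => fand (flift c g) (flift c h)
  | for_ g h => for_ (flift c g) (flift c h)
  | fimp g h => fimp (flift c g) (flift c h)
  | fall g => fall (flift (S c) g)
  | fex g => fex (flift (S c) g)
  | fallS g => fallS (flift c g)
  | fexS g => fexS (flift c g)
  end.

Definition ins (c : nat) (x : N) (e : nat -> N) (n : nat) : N :=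
  if Nat.ltb n c then e n else if Nat.eqb n c then x else e (pred n).

Lemma teval_ext e1 e2 t : (forall n, e1 n = e2 n) -> teval A e1 t = teval A e2 t.
Proof. intro H; induction t; simpl; congruence. Qed.

Lemma sat_ext f : forall e1 e2 E, (forall n, e1 n = e2 n) -> (sat A e1 E f <-> sat A e2 E f).
Proof.
  induction f; intros e1 e2 E H; simpl;
  try (rewrite !(teval_ext e1 e2) by auto; tauto).
  - rewrite (IHf e1 e2 E H); tauto.
  - rewrite (IHf1 e1 e2 E H), (IHf2 e1 e2 E H); tauto.
  - rewrite (IHf1 e1 e2 E H), (IHf2 e1 e2 E H); tauto.
  - rewrite (IHf1 e1 e2 E H), (IHf2 e1 e2 E H); tauto.
  - split; intros H1 m; apply (IHf (scons m e1) (scons m e2) E); try (intros [|k]; simpl; auto); auto;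
      apply H1.
  - split; intros [m H1]; exists m; apply (IHf (scons m e1) (scons m e2) E); try (intros [|k]; simpl; auto); auto.
  - split; intros H1 X; apply (IHf e1 e2 (scons X E)); auto.
  - split; intros [X H1]; exists X; apply (IHf e1 e2 (scons X E)); auto.
Qed.

Lemma teval_lift t : forall c x e, teval A (ins c x e) (tlift c t) = teval A e t.
Proof.
  induction t; intros c x e; try (simpl; congruence).
  unfold tlift. destruct (Nat.ltb n c) eqn:H1; unfold teval, ins.
  - rewrite H1; auto.
  - apply Nat.ltb_ge in H1.
    assert (H2 : Nat.ltb (S n) c = false) by (apply Nat.ltb_ge; auto).
    assert (H3 : Nat.eqb (S n) c = false).
    { apply Nat.eqb_neq. intro; subst c. apply (Nat.nle_succ_diag_l n); auto. }
    rewrite H2, H3. reflexivity.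
Qed.

Lemma ins_scons c x m e n : ins (S c) x (scons m e) n = scons m (ins c x e) n.
Proof.
  destruct n as [|k]; [reflexivity|].
  unfold ins. change (S k <? S c) with (k <? c). change (S k =? S c) with (k =? c).
  change (pred (S k)) with k. change (scons m (fun n => if n <? c then e n else if n =? c then x else e (pred n)) (S k))
    with (if k <? c then e k else if k =? c then x else e (pred k)).
  destruct (k <? c) eqn:H1; [reflexivity|].
  destruct (k =? c) eqn:H2; [reflexivity|].
  destruct k as [|j]; [|reflexivity].
  apply Nat.ltb_ge in H1. apply Nat.eqb_neq in H2. exfalso. apply H2.
  apply Nat.le_0_r in H1; auto.
Qed.

Lemma sat_lift f : forall c x e E, sat A (ins c x e) E (flift c f) <-> sat A e E f.
Proof.
  induction f; intros c x e E; simpl; try (rewrite !teval_lift; tauto).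
  - rewrite IHf; tauto.
  - rewrite IHf1, IHf2; tauto.
  - rewrite IHf1, IHf2; tauto.
  - rewrite IHf1, IHf2; tauto.
  - split; intros H m; specialize (H m).
    + rewrite <- (IHf (S c) x (scons m e) E). eapply sat_ext; [|exact H]. intro n; apply ins_scons.
    + rewrite <- (IHf (S c) x (scons m e) E) in H. eapply sat_ext; [|exact H]. intro n; symmetry; apply ins_scons.
  - split; intros [m H]; exists m.
    + rewrite <- (IHf (S c) x (scons m e) E). eapply sat_ext; [|exact H]. intro n; apply ins_scons.
    + rewrite <- (IHf (S c) x (scons m e) E) in H. eapply sat_ext; [|exact H]. intro n; symmetry; apply ins_scons.
  - split; intros H X; specialize (H X); [apply (IHf c x e) | apply (IHf c x e) in H]; auto.
  - split; intros [X H]; exists X; [apply (IHf c x e) in H | apply (IHf c x e)]; auto.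
Qed.

Lemma flift_arith f c : arithmetical f -> arithmetical (flift c f).
Proof. revert c; induction f; simpl; intros; tauto || (intuition; eauto). Qed.

Lemma Def1_not Q : Def1 Q -> Def1 (fun n => ~ Q n).
Proof.
  intros [e [phi [H1 H2]]]. exists e, (fnot phi); split; auto.
  intro n; simpl; rewrite H1; tauto.
Qed.

Lemma Def1_below Q : Def1 Q -> Def1 (fun k => forall m, m ≺ k -> ~ Q m).
Proof.
  intros [e [phi [H1 H2]]].
  exists e, (fall (fimp (flt (tvar 0) (tvar 1)) (fnot (flift 1 phi)))); split.
  - intro k; simpl. split; intros H m Hm; specialize (H m Hm).
    + intro H3; apply H. rewrite H1. rewrite <- (sat_lift phi 1 k).
      eapply sat_ext; [|exact H3]. intros [|[|j]]; reflexivity.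
    + intro H3; apply H. rewrite H1 in H3. rewrite <- (sat_lift phi 1 k) in H3.
      eapply sat_ext; [|exact H3]. intros [|[|j]]; reflexivity.
  - simpl; split; auto. apply flift_arith; auto.
Qed.

Lemma CA1 Q : Def1 Q -> exists X, forall n, mem A n X <-> Q n.
Proof.
  intros [e [phi [H1 H2]]]. destruct HA as [_ [_ Hca]].
  destruct (Hca phi H2 e E0) as [X HX]. exists X. intro n; rewrite HX, H1; tauto.
Qed.

Lemma IND1 Q : Def1 Q -> Q zz -> (forall n, Q n -> Q (n ⊕ oo)) -> forall n, Q n.
Proof.
  intros HD H0 HS. destruct (CA1 Q HD) as [X HX]. destruct HA as [_ [Hind _]].
  intro n. apply HX. apply Hind. apply HX; auto. intros m Hm; apply HX; apply HS; apply HX; auto.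
Qed.

Section Basic.
Let HB := proj1 HA.
Lemma ax_S0 n : n ⊕ oo <> zz. Proof. apply HB. Qed.
Lemma ax_Sinj m n : m ⊕ oo = n ⊕ oo -> m = n. Proof. apply HB. Qed.
Lemma ax_add0 m : m ⊕ zz = m. Proof. apply HB. Qed.
Lemma ax_addS m n : m ⊕ (n ⊕ oo) = (m ⊕ n) ⊕ oo. Proof. apply HB. Qed.
Lemma ax_mul0 m : m ⊗ zz = zz. Proof. apply HB. Qed.
Lemma ax_mulS m n : m ⊗ (n ⊕ oo) = m ⊗ n ⊕ m. Proof. apply HB. Qed.
Lemma ax_lt0 m : ~ m ≺ zz. Proof. apply HB. Qed.
Lemma ax_ltS m n : m ≺ n ⊕ oo <-> m ≺ n \/ m = n. Proof. apply HB. Qed.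
End Basic.

Lemma LNP Q : Def1 Q -> forall n, Q n -> exists m, Q m /\ forall k, k ≺ m -> ~ Q k.
Proof.
  intros HD n Hn. apply NNPP; intro Hno.
  assert (B : forall k, forall m, m ≺ k -> ~ Q m).
  { apply (IND1 (fun k => forall m, m ≺ k -> ~ Q m)). apply Def1_below; auto.
    - intros m Hm; exfalso; apply (ax_lt0 m); auto.
    - intros k IH m Hm. apply ax_ltS in Hm. destruct Hm as [Hm|Hm]; auto.
      subst m. intro Hk. apply Hno. exists k; split; auto. }
  apply (B (n ⊕ oo) n); auto. apply ax_ltS; auto.
Qed.

Lemma strong_ind Q : Def1 Q -> (forall n, (forall m, m ≺ n -> Q m) -> Q n) -> forall n, Q n.
Proof.
  intros HD H n. apply NNPP; intro Hn.
  destruct (LNP (fun n => ~ Q n) (Def1_not Q HD) n Hn) as [m [Hm1 Hm2]].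
  apply Hm1, H. intros k Hk. apply NNPP; intro; eapply Hm2; eauto.
Qed.

Ltac induct n := revert n; match goal with |- forall n, @?Q n => apply (IND1 Q); [dfn | | ] end.

Lemma add0l : forall n, zz ⊕ n = n.
Proof. intro n; induct n. apply ax_add0. intros n IH; rewrite ax_addS, IH; auto. Qed.

Lemma addSl : forall n m, (m ⊕ oo) ⊕ n = (m ⊕ n) ⊕ oo.
Proof. intro n; induct n. intro m; rewrite !ax_add0; auto.
  intros n IH m. rewrite !ax_addS, IH; auto. Qed.

Lemma add_comm : forall n m, m ⊕ n = n ⊕ m.
Proof. intro n; induct n. intro m; rewrite ax_add0, add0l; auto.
  intros n IH m. rewrite ax_addS, addSl, IH; auto. Qed.

Lemma add_assoc : forall c a b, a ⊕ (b ⊕ c) = (a ⊕ b) ⊕ c.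
Proof. intro c; induct c. intros; rewrite !ax_add0; auto.
  intros c IH a b. rewrite !ax_addS, IH; auto. Qed.

Lemma mul0l : forall n, zz ⊗ n = zz.
Proof. intro n; induct n. apply ax_mul0. intros n IH; rewrite ax_mulS, IH, ax_add0; auto. Qed.

Lemma mulSl : forall n m, (m ⊕ oo) ⊗ n = m ⊗ n ⊕ n.
Proof. intro n; induct n. intro m; rewrite !ax_mul0, ax_add0; auto.
  intros n IH m. rewrite !ax_mulS, IH.
  rewrite <- !add_assoc. f_equal. rewrite !ax_addS. f_equal. apply add_comm. Qed.

Lemma mul_comm : forall n m, m ⊗ n = n ⊗ m.
Proof. intro n; induct n. intro m; rewrite ax_mul0, mul0l; auto.
  intros n IH m. rewrite ax_mulS, mulSl, IH; auto. Qed.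

Lemma mul_distr : forall c a b, a ⊗ (b ⊕ c) = a ⊗ b ⊕ a ⊗ c.
Proof. intro c; induct c. intros; rewrite ax_add0, ax_mul0, ax_add0; auto.
  intros c IH a b. rewrite ax_addS, !ax_mulS, IH, add_assoc; auto. Qed.

Lemma mul_assoc : forall c a b, a ⊗ (b ⊗ c) = (a ⊗ b) ⊗ c.
Proof. intro c; induct c. intros; rewrite !ax_mul0; auto.
  intros c IH a b. rewrite !ax_mulS, mul_distr, IH; auto. Qed.

Lemma mul1l n : oo ⊗ n = n.
Proof. rewrite <- (add0l oo), mulSl, mul0l, add0l; auto. Qed.

Lemma NSRth : semi_ring_theory zz oo (add A) (mul A) (@eq N).
Proof.
  constructor.
  - apply add0l.
  - intros; apply add_comm.
  - intros; apply add_assoc.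
  - apply mul1l.
  - apply mul0l.
  - intros; apply mul_comm.
  - intros; apply mul_assoc.
  - intros n m p. rewrite (mul_comm p (n ⊕ m)), mul_distr, !(mul_comm p); auto.
Qed.

Add Ring NRing : NSRth.

Lemma zero_or_succ : forall n, n = zz \/ exists p, n = p ⊕ oo.
Proof. intro n; induct n. auto. intros n _; right; exists n; auto. Qed.

Lemma add_cancel : forall a b c, a ⊕ b = a ⊕ c -> b = c.
Proof. intro a; induct a. intros b c; rewrite !add0l; auto.
  intros a IH b c H. apply IH. apply ax_Sinj. rewrite <- !addSl; auto. Qed.

Lemma lt_iff : forall n m, m ≺ n <-> exists d, n = m ⊕ d ⊕ oo.
Proof. intro n; induct n.
  - intro m; split. intro H; exfalso; apply (ax_lt0 m); auto.
    intros [d H]. exfalso; apply (ax_S0 (m ⊕ d)); auto.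
  - intros n IH m. rewrite ax_ltS. split.
    + intros [H|H]. apply IH in H. destruct H as [d H]. exists (d ⊕ oo). rewrite H; ring.
      subst; exists zz; ring.
    + intros [d H]. apply ax_Sinj in H. destruct (zero_or_succ d) as [Hd|[p Hp]].
      subst. right; ring. left. apply IH. exists p. rewrite H, Hp; ring.
Qed.

Definition le (a b : N) : Prop := a ≺ b \/ a = b.
Local Infix "≼" := le (at level 70).

Lemma lt_irrefl n : ~ n ≺ n.
Proof. intro H. apply lt_iff in H. destruct H as [d H].
  apply (ax_S0 d). apply (add_cancel n). rewrite ax_add0. symmetry. rewrite H at 1. ring. Qed.

Lemma lt_trans a b c : a ≺ b -> b ≺ c -> a ≺ c.
Proof. rewrite !lt_iff. intros [d H1] [e H2]. exists (d ⊕ oo ⊕ e). rewrite H2, H1; ring. Qed.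

Lemma lt_asym a b : a ≺ b -> ~ b ≺ a.
Proof. intros H1 H2. apply (lt_irrefl a). eapply lt_trans; eauto. Qed.

Lemma lt_succ n : n ≺ n ⊕ oo.
Proof. apply lt_iff. exists zz; ring. Qed.

Lemma trich : forall m n, m ≺ n \/ m = n \/ n ≺ m.
Proof. intro m; induct m.
  - intro n. destruct (zero_or_succ n) as [H|[p H]]; subst. auto.
    left. apply lt_iff. exists p; ring.
  - intros m IH n. destruct (IH n) as [H|[H|H]].
    + apply lt_iff in H. destruct H as [d H]. destruct (zero_or_succ d) as [Hd|[p Hp]]; subst.
      right; left; ring. left; apply lt_iff; exists p; ring.
    + subst. right; right; apply lt_succ.
    + right; right. eapply lt_trans; eauto. apply lt_succ.
Qed.

Lemma lt_succ_le a b : a ≺ b -> a ⊕ oo ≼ b.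
Proof. intro H; apply lt_iff in H; destruct H as [d H]. destruct (zero_or_succ d) as [Hd|[p Hp]]; subst.
  right; ring. left; apply lt_iff; exists p; ring. Qed.

Lemma lt_S_le a b : a ≺ b ⊕ oo <-> a ≼ b.
Proof. apply ax_ltS. Qed.

Lemma le_refl a : a ≼ a. Proof. right; auto. Qed.
Lemma le_lt_trans a b c : a ≼ b -> b ≺ c -> a ≺ c.
Proof. intros [H|H] H2; subst; auto. eapply lt_trans; eauto. Qed.
Lemma lt_le_trans a b c : a ≺ b -> b ≼ c -> a ≺ c.
Proof. intros H [H2|H2]; subst; auto. eapply lt_trans; eauto. Qed.
Lemma le_trans a b c : a ≼ b -> b ≼ c -> a ≼ c.
Proof. intros [H|H] H2; subst; auto. left; eapply lt_le_trans; eauto. Qed.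
Lemma le_antisym a b : a ≼ b -> b ≼ a -> a = b.
Proof. intros [H|H] [H2|H2]; auto. exfalso; eapply lt_asym; eauto. Qed.
Lemma not_lt_le a b : ~ a ≺ b -> b ≼ a.
Proof. intro H. destruct (trich a b) as [H1|[H1|H1]]. tauto. right; auto. left; auto. Qed.
Lemma le_not_lt a b : a ≼ b -> ~ b ≺ a.
Proof. intros [H|H] H2; subst. eapply lt_asym; eauto. eapply lt_irrefl; eauto. Qed.
Lemma lt_not_le a b : a ≺ b -> ~ b ≼ a.
Proof. intros H H2. eapply le_not_lt; eauto. Qed.
Lemma le_iff a b : a ≼ b <-> exists d, b = a ⊕ d.
Proof. split.
  - intros [H|H]. apply lt_iff in H. destruct H as [d H]. exists (d ⊕ oo); rewrite H; ring. exists zz; subst; ring.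
  - intros [d H]. destruct (zero_or_succ d) as [Hd|[p Hp]]; subst. right; ring. left; apply lt_iff; exists p; ring.
Qed.
Lemma le_add a b : a ≼ a ⊕ b. Proof. apply le_iff; eauto. Qed.
Lemma zz_le a : zz ≼ a. Proof. apply le_iff. exists a; ring. Qed.
Lemma zz_lt_succ a : zz ≺ a ⊕ oo. Proof. apply lt_iff. exists a; ring. Qed.
Lemma zz_lt_oo : zz ≺ oo. Proof. apply lt_iff. exists zz; ring. Qed.
Lemma neq0_lt a : a <> zz -> zz ≺ a.
Proof. intro H. destruct (zero_or_succ a) as [H1|[p H1]]; subst. tauto. apply zz_lt_succ. Qed.
Lemma lt_neq a b : a ≺ b -> a <> b. Proof. intros H H1; subst; eapply lt_irrefl; eauto. Qed.

Lemma lt_add_r a b c : a ≺ b -> a ⊕ c ≺ b ⊕ c.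
Proof. rewrite !lt_iff. intros [d H]; exists d; subst; ring. Qed.
Lemma le_add_r a b c : a ≼ b -> a ⊕ c ≼ b ⊕ c.
Proof. rewrite !le_iff. intros [d H]; exists d; subst; ring. Qed.
Lemma lt_add_cancel a b c : a ⊕ c ≺ b ⊕ c -> a ≺ b.
Proof. intro H. destruct (trich a b) as [H1|[H1|H1]]; auto; exfalso.
  subst; eapply lt_irrefl; eauto. exact (lt_asym _ _ H (lt_add_r _ _ _ H1)). Qed.
Lemma le_add_cancel a b c : a ⊕ c ≼ b ⊕ c -> a ≼ b.
Proof. intro H. apply not_lt_le. intro H1. apply (le_not_lt _ _ H). apply lt_add_r; auto. Qed.

Lemma lt_mul a b c : zz ≺ c -> a ≺ b -> a ⊗ c ≺ b ⊗ c.
Proof. intros Hc H. apply lt_iff in H. destruct H as [d H]. subst.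
  destruct (zero_or_succ c) as [H|[p H]]; subst. exfalso; eapply lt_irrefl; eauto.
  apply lt_iff. exists (d ⊗ (p ⊕ oo) ⊕ p). ring. Qed.
Lemma le_mul a b c : a ≼ b -> a ⊗ c ≼ b ⊗ c.
Proof. rewrite !le_iff. intros [d H]; exists (d ⊗ c); subst; ring. Qed.
Lemma mul_cancel a b c : zz ≺ c -> a ⊗ c = b ⊗ c -> a = b.
Proof. intros Hc H. destruct (trich a b) as [H1|[H1|H1]]; auto; exfalso.
  eapply lt_neq; [apply (lt_mul _ _ c Hc H1)|auto].
  eapply lt_neq; [apply (lt_mul _ _ c Hc H1)|auto]. Qed.
Lemma le_mul_pos a c : zz ≺ c -> a ≼ a ⊗ c.
Proof. intro Hc. destruct (zero_or_succ c) as [H|[p H]]; subst. exfalso; eapply lt_irrefl; eauto.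
  apply le_iff. exists (a ⊗ p); ring. Qed.

Definition divides (d n : N) : Prop := exists q, n = d ⊗ q.
Definition prime (p : N) : Prop := oo ≺ p /\ forall d, divides d p -> d = oo \/ d = p.

Lemma div_alg b : zz ≺ b -> forall a, exists q r, a = q ⊗ b ⊕ r /\ r ≺ b.
Proof. intros Hb a; induct a.
  - exists zz, zz; split; auto; ring.
  - intros a [q [r [H1 H2]]]. destruct (lt_succ_le _ _ H2) as [H|H].
    + exists q, (r ⊕ oo); split; auto. rewrite H1; ring.
    + exists (q ⊕ oo), zz; split; auto. rewrite H1, <- H; ring.
Qed.

Lemma divides_le d n : divides d n -> zz ≺ n -> d ≼ n.
Proof. intros [q H] Hn. subst. destruct (zero_or_succ q) as [Hq|[p Hp]]; subst.
  exfalso. rewrite ax_mul0 in Hn. eapply lt_irrefl; eauto.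
  apply le_mul_pos. apply zz_lt_succ. Qed.

Lemma divides_refl d : divides d d. Proof. exists oo; ring. Qed.
Lemma divides_oo n : divides oo n. Proof. exists n; ring. Qed.
Lemma divides_zz d : divides d zz. Proof. exists zz; ring. Qed.
Lemma divides_trans a b c : divides a b -> divides b c -> divides a c.
Proof. intros [q H] [r H2]; subst. exists (q ⊗ r); ring. Qed.
Lemma divides_add d a b : divides d a -> divides d b -> divides d (a ⊕ b).
Proof. intros [q H] [r H2]; subst. exists (q ⊕ r); ring. Qed.
Lemma divides_mul d a b : divides d a -> divides d (a ⊗ b).
Proof. intros [q H]; subst. exists (q ⊗ b); ring. Qed.
Lemma divides_mul_l d b : divides d (b ⊗ d).
Proof. exists b; ring. Qed.

Lemma divides_sub d a b : divides d (a ⊕ b) -> divides d a -> divides d b.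
Proof. intros [v H1] [u H2]. destruct (classic (d = zz)) as [Hd|Hd].
  - subst d. exists zz. rewrite mul0l in H1, H2. subst a. rewrite add0l in H1. subst b. ring.
  - apply neq0_lt in Hd. destruct (trich v u) as [H|[H|H]].
    + exfalso. apply (lt_mul _ _ d Hd) in H. rewrite (mul_comm d v), (mul_comm d u) in *.
      rewrite <- H1, <- H2 in H. apply (le_not_lt _ _ (le_add a b)); auto.
    + subst v. exists zz. apply (add_cancel a). rewrite H1, H2; ring.
    + apply lt_iff in H. destruct H as [w H]. exists (w ⊕ oo). apply (add_cancel a).
      rewrite H1, H, H2; ring.
Qed.

Lemma prime_pos p : prime p -> zz ≺ p.
Proof. intros [H _]. eapply lt_trans; eauto. apply zz_lt_oo. Qed.

Lemma lt_oo a : a ≺ oo -> a = zz.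
Proof. intro H. rewrite <- (add0l oo) in H. apply lt_S_le in H. destruct H as [H|H]; auto.
  exfalso; eapply ax_lt0; eauto. Qed.

Lemma euclid p a b : prime p -> divides p (a ⊗ b) -> divides p a \/ divides p b.
Proof. intros Hp Hab. destruct (classic (divides p a)) as [Ha|Ha]; auto. right.
  assert (Ha0 : zz ≺ a). { apply neq0_lt. intro; subst; apply Ha, divides_zz. }
  assert (HD : Def1 (fun d => zz ≺ d /\ divides p (d ⊗ b))) by dfn.
  destruct (LNP _ HD a (conj Ha0 Hab)) as [d0 [[Hd0 Hd0b] Hmin]].
  assert (Hdiv : forall e, zz ≺ e -> divides p (e ⊗ b) -> divides d0 e).
  { intros e He Heb. destruct (div_alg d0 Hd0 e) as [q [r [H1 H2]]].
    destruct (classic (r = zz)) as [Hr|Hr].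
    - subst. exists q. rewrite ax_add0. ring.
    - exfalso. apply (Hmin r H2). split. apply neq0_lt; auto.
      apply (divides_sub _ (q ⊗ (d0 ⊗ b))). 
      replace (q ⊗ (d0 ⊗ b) ⊕ r ⊗ b) with (e ⊗ b) by (rewrite H1; ring). auto.
      replace (q ⊗ (d0 ⊗ b)) with ((d0 ⊗ b) ⊗ q) by ring. apply divides_mul; auto. }
  assert (H1 : divides d0 p). { apply Hdiv. apply prime_pos; auto. apply divides_mul, divides_refl. }
  destruct Hp as [Hp1 Hp2]. destruct (Hp2 d0 H1) as [H|H]; subst.
  - rewrite mul1l in Hd0b; auto.
  - exfalso; apply Ha, Hdiv; auto.
Qed.

Lemma prime_divisor n : oo ≺ n -> exists p, prime p /\ divides p n.
Proof. intro Hn.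
  assert (HD : Def1 (fun d => oo ≺ d /\ divides d n)) by dfn.
  destruct (LNP _ HD n (conj Hn (divides_refl n))) as [d0 [[Hd0 Hd0n] Hmin]].
  exists d0; split; auto. split; auto. intros e He.
  destruct (trich e oo) as [H|[H|H]]; auto.
  - apply lt_oo in H. subst. destruct He as [q Hq]. rewrite mul0l in Hq. subst.
    exfalso; eapply ax_lt0; eauto.
  - right. assert (Hle : e ≼ d0). { apply divides_le; auto. eapply lt_trans; eauto. apply zz_lt_oo. }
    destruct Hle as [Hle|Hle]; auto. exfalso. apply (Hmin e Hle). split; auto.
    eapply divides_trans; eauto.
Qed.

Lemma multiple : forall n, exists m, zz ≺ m /\ forall k, zz ≺ k -> k ≼ n -> divides k m.
Proof. intro n; induct n.
  - exists oo. split. apply zz_lt_oo. intros k Hk Hk2. exfalso. apply (le_not_lt _ _ Hk2); auto.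
  - intros n [m [Hm Hk]]. exists (m ⊗ (n ⊕ oo)). split.
    + eapply lt_le_trans; eauto. apply le_mul_pos. apply zz_lt_succ.
    + intros k Hk1 Hk2. destruct Hk2 as [H|H].
      * apply divides_mul. apply Hk; auto. apply lt_S_le; auto.
      * subst. apply divides_mul_l.
Qed.

Lemma prime_gt n : exists p, prime p /\ n ≺ p.
Proof. destruct (multiple n) as [m [Hm Hk]].
  destruct (prime_divisor (m ⊕ oo)) as [p [Hp Hpm]].
  { rewrite <- (add0l oo) at 1. apply lt_add_r; auto. }
  exists p; split; auto. apply NNPP; intro H. apply not_lt_le in H.
  assert (H1 : divides p oo). { apply (divides_sub _ m); auto. apply Hk; auto. apply prime_pos; auto. }
  apply divides_le in H1. destruct Hp as [Hp _]. apply (le_not_lt _ _ H1); auto. apply zz_lt_oo.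
Qed.

Lemma prime_div_prime p q : prime p -> prime q -> divides p q -> p = q.
Proof. intros [Hp _] [_ Hq] H. destruct (Hq p H); auto. subst. exfalso; eapply lt_irrefl; eauto. Qed.

Definition inS (x f : N) : Prop := prime x /\ divides x f.

Lemma inS_mul x f q : prime q -> (inS x (f ⊗ q) <-> inS x f \/ x = q).
Proof. intro Hq. unfold inS. split.
  - intros [Hx H]. destruct (euclid _ _ _ Hx H); auto. right; apply prime_div_prime; auto.
  - intros [[Hx H]|H]; subst; split; auto. apply divides_mul; auto. apply divides_mul_l.
Qed.

Lemma inS_oo x : ~ inS x oo.
Proof. intros [[Hx _] H]. apply divides_le in H. apply (le_not_lt _ _ H); auto. apply zz_lt_oo. Qed.

Lemma inS_lt x f : zz ≺ f -> inS x f -> x ≺ f ⊕ oo.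
Proof. intros Hf [_ H]. apply lt_S_le. apply divides_le; auto. Qed.

Hypothesis HC : is_coloring A C.

Definition col (x y k : N) : Prop := mem A (pair A (pair A x y) k) C.

Lemma col_ex x y : x ≺ y -> exists k, col x y k.
Proof. apply HC. Qed.
Lemma col_uniq x y k k' : x ≺ y -> col x y k -> col x y k' -> k = k'.
Proof. apply HC. Qed.

Definition ConLe (f g t i z : N) : Prop :=
  (inS i g -> forall w k, inS w f -> i ≺ w -> w ≼ t -> col i w k -> col i z k) /\
  (~ inS i g -> forall h k, inS h f -> h ≺ i -> col h i k -> ~ col i z k).
Definition ConLt (f g t i z : N) : Prop :=
  (inS i g -> forall w k, inS w f -> i ≺ w -> w ≺ t -> col i w k -> col i z k) /\
  (~ inS i g -> forall h k, inS h f -> h ≺ i -> col h i k -> ~ col i z k).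
Definition ConsLe (f g t z : N) : Prop := forall i, inS i f -> i ≺ t -> ConLe f g t i z.
Definition ConsLt (f g t z : N) : Prop := forall i, inS i f -> i ≺ t -> ConLt f g t i z.
Definition Rt (f g t z : N) : Prop := prime z /\ t ≺ z /\ ConsLe f g t z.
Definition InfK (f g t k : N) : Prop := forall b, exists z, b ≺ z /\ Rt f g t z /\ col t z k.
Definition FinType (f g t : N) : Prop := exists k, InfK f g t k.
Definition Kappa (f g t k : N) : Prop := InfK f g t k /\ forall k', k' ≺ k -> ~ InfK f g t k'.
Definition Pred (f t p : N) : Prop := inS p f /\ p ≺ t /\ forall p', inS p' f -> p' ≺ t -> p' ≼ p.
Definition Choice (f g t z : N) : Prop :=
  prime z /\ (forall i, inS i f -> i ≺ t -> i ≺ z) /\ ConsLt f g t z /\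
  (forall p k, Pred f t p -> inS p g -> Kappa f g p k -> col p z k).
Definition Valid (f g : N) : Prop :=
  (forall x, inS x g -> inS x f) /\
  forall t, inS t f -> Choice f g t t /\ (forall z, Choice f g t z -> t ≼ z) /\ (inS t g <-> FinType f g t).
Definition InfNext (f g : N) : Prop := forall b, exists z, b ≺ z /\ Choice f g (f ⊕ oo) z.

Definition PA (f1 g1 f2 g2 t : N) : Prop :=
  forall x, x ≺ t -> (inS x f1 <-> inS x f2) /\ (inS x f1 -> (inS x g1 <-> inS x g2)).

Lemma PA_sym f1 g1 f2 g2 t : PA f1 g1 f2 g2 t -> PA f2 g2 f1 g1 t.
Proof. intros H x Hx. destruct (H x Hx) as [H1 H2]. split. tauto. intro H3. apply H1 in H3. specialize (H2 H3). tauto. Qed.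

Lemma PA_mono f1 g1 f2 g2 t s : PA f1 g1 f2 g2 t -> s ≼ t -> PA f1 g1 f2 g2 s.
Proof. intros H Hs x Hx. apply H. eapply lt_le_trans; eauto. Qed.

Lemma ConsLt_PA f1 g1 f2 g2 t z : PA f1 g1 f2 g2 t -> ConsLt f1 g1 t z -> ConsLt f2 g2 t z.
Proof. intros HP H i Hi2 Hit. destruct (HP i Hit) as [Hf Hg].
  assert (Hi1 : inS i f1) by tauto. specialize (Hg Hi1).
  destruct (H i Hi1 Hit) as [Hfin Hinf]. split.
  - intros Hg2 w k Hw2 Hiw Hwt. apply Hfin; auto. tauto. apply (HP w Hwt); auto.
  - intros Hg2 h k Hh2 Hhi. apply Hinf; auto. tauto. apply (HP h); auto. eapply lt_trans; eauto.
Qed.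

Lemma ConsLe_PA f1 g1 f2 g2 t z : PA f1 g1 f2 g2 t -> (inS t f1 <-> inS t f2) ->
  ConsLe f1 g1 t z -> ConsLe f2 g2 t z.
Proof. intros HP Ht H i Hi2 Hit. destruct (HP i Hit) as [Hf Hg].
  assert (Hi1 : inS i f1) by tauto. specialize (Hg Hi1).
  destruct (H i Hi1 Hit) as [Hfin Hinf]. split.
  - intros Hg2 w k Hw2 Hiw Hwt. apply Hfin; auto. tauto.
    destruct Hwt as [Hwt|Hwt]. apply (HP w Hwt); auto. subst; tauto.
  - intros Hg2 h k Hh2 Hhi. apply Hinf; auto. tauto. apply (HP h); auto. eapply lt_trans; eauto.
Qed.

Section AgreeLe.
Variables f1 g1 f2 g2 t : N.
Hypothesis Hiff : forall z, ConsLe f1 g1 t z <-> ConsLe f2 g2 t z.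
Lemma InfK_iff k : InfK f1 g1 t k <-> InfK f2 g2 t k.
Proof. unfold InfK, Rt. split; intros H b; destruct (H b) as [z Hz]; exists z; rewrite Hiff in *; tauto. Qed.
Lemma FinType_iff : FinType f1 g1 t <-> FinType f2 g2 t.
Proof. unfold FinType. split; intros [k Hk]; exists k; apply InfK_iff; auto. Qed.
Lemma Kappa_iff k : Kappa f1 g1 t k <-> Kappa f2 g2 t k.
Proof. unfold Kappa. split; intros [H1 H2]; (split; [apply InfK_iff; auto|]);
  intros k' Hk'; rewrite ?InfK_iff in *; auto. rewrite <- InfK_iff. auto. Qed.
End AgreeLe.

Lemma ConsLe_iff f1 g1 f2 g2 t : PA f1 g1 f2 g2 t -> (inS t f1 <-> inS t f2) ->
  forall z, ConsLe f1 g1 t z <-> ConsLe f2 g2 t z.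
Proof. intros HP Ht z; split; apply ConsLe_PA; auto. apply PA_sym; auto. tauto. Qed.

Lemma Choice_PA f1 g1 f2 g2 t z : PA f1 g1 f2 g2 t -> Choice f1 g1 t z -> Choice f2 g2 t z.
Proof. intros HP [Hz [Hab [Hcons Hk]]]. split; [auto|split; [|split]].
  - intros i Hi Hit. apply Hab; auto. apply (HP i Hit); auto.
  - eapply ConsLt_PA; eauto.
  - intros p k [Hp2 [Hpt Hpmax]] Hg2 Hkap.
    assert (Hp1 : inS p f1) by (apply (HP p Hpt); auto).
    apply Hk.
    + split; auto. split; auto. intros p' Hp' Hp't. apply Hpmax; auto. apply (HP p' Hp't); auto.
    + apply (HP p Hpt); auto.
    + assert (HPp : PA f1 g1 f2 g2 p) by (apply (PA_mono _ _ _ _ t); auto; left; auto).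
      rewrite (Kappa_iff f1 g1 f2 g2 p); auto. apply ConsLe_iff; auto. split; auto.
Qed.

Lemma Choice_SP f g t1 t2 z : (forall x, inS x f -> (x ≺ t1 <-> x ≺ t2)) ->
  Choice f g t1 z -> Choice f g t2 z.
Proof. intros HS [Hz [Hab [Hcons Hk]]]. split; [auto|split; [|split]].
  - intros i Hi Hit. apply Hab; auto. apply HS; auto.
  - intros i Hi Hit. assert (Hit1 : i ≺ t1) by (apply HS; auto).
    destruct (Hcons i Hi Hit1) as [Hfin Hinf]. split; auto.
    intros Hg w k Hw Hiw Hwt. apply Hfin; auto. apply HS; auto.
  - intros p k [Hp [Hpt Hpmax]] Hg Hkap. apply Hk; auto. split; auto. split. apply HS; auto.
    intros p' Hp' Hp't. apply Hpmax; auto. apply HS; auto.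
Qed.

Lemma Kappa_uniq f g t k k' : Kappa f g t k -> Kappa f g t k' -> k = k'.
Proof. intros [H1 H2] [H3 H4]. destruct (trich k k') as [H|[H|H]]; auto; exfalso.
  apply (H4 k H H1). apply (H2 k' H H3). Qed.

Lemma Kappa_ex f g t : FinType f g t -> exists k, Kappa f g t k.
Proof. intros [k Hk]. assert (HD : Def1 (fun k => InfK f g t k)) by dfn.
  destruct (LNP _ HD k Hk) as [m [Hm1 Hm2]]. exists m; split; auto. Qed.

Lemma le_add_l a b : b ≼ a ⊕ b. Proof. apply le_iff. exists a; ring. Qed.

Definition Coh (f1 g1 f2 g2 x : N) : Prop :=
  inS x f1 -> (exists u, inS u f2 /\ x ≼ u) -> inS x f2 /\ (inS x g1 <-> inS x g2).

Lemma coh_step f1 g1 f2 g2 x : Valid f1 g1 -> Valid f2 g2 ->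
  (forall y, y ≺ x -> Coh f1 g1 f2 g2 y /\ Coh f2 g2 f1 g1 y) -> Coh f1 g1 f2 g2 x.
Proof.
  intros V1 V2 IH Hx1 [u [Hu Hxu]].
  assert (HP : PA f1 g1 f2 g2 x).
  { intros y Hy. destruct (IH y Hy) as [C12 C21]. split.
    - split; intro H.
      + apply C12; auto. exists u; split; auto. left; eapply lt_le_trans; eauto.
      + apply C21; auto. exists x; split; auto. left; auto.
    - intro H. apply C12; auto. exists u; split; auto. left; eapply lt_le_trans; eauto. }
  assert (Hx2 : inS x f2).
  { assert (HD : Def1 (fun u => inS u f2 /\ x ≼ u)) by dfn.
    destruct (LNP _ HD u (conj Hu Hxu)) as [u0 [[Hu0 Hxu0] Hmin]].
    destruct Hxu0 as [Hlt|Heq]; [|subst; auto].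
    exfalso.
    assert (Ch1 : Choice f1 g1 x x) by apply (proj2 V1 x Hx1).
    assert (Ch2 : Choice f2 g2 x x) by (eapply Choice_PA; eauto).
    assert (Ch3 : Choice f2 g2 u0 x).
    { eapply Choice_SP; [|exact Ch2]. intros y Hy; split; intro H.
      eapply lt_trans; eauto. apply NNPP; intro Hn. apply not_lt_le in Hn.
      apply (Hmin y H). split; auto. }
    destruct (proj2 V2 u0 Hu0) as [_ [Mn _]]. apply (lt_not_le _ _ Hlt). apply Mn; auto. }
  split; auto.
  destruct (proj2 V1 x Hx1) as [_ [_ G1]]. destruct (proj2 V2 x Hx2) as [_ [_ G2]].
  rewrite G1, G2. apply FinType_iff. apply ConsLe_iff; auto. tauto.
Qed.

Lemma coherence f1 g1 f2 g2 : Valid f1 g1 -> Valid f2 g2 ->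
  forall x, Coh f1 g1 f2 g2 x /\ Coh f2 g2 f1 g1 x.
Proof. intros V1 V2. apply strong_ind. dfn.
  intros x IH. split; apply coh_step; auto. intros y Hy; destruct (IH y Hy); split; auto. Qed.

Lemma next_from_Rt f' g' t T' z :
  (forall x, inS x f' -> x ≼ t) -> inS t f' -> t ≺ T' ->
  Rt f' g' t z ->
  (inS t g' -> forall k, Kappa f' g' t k -> col t z k) ->
  (~ inS t g' -> forall h k, inS h f' -> h ≺ t -> col h t k -> ~ col t z k) ->
  Choice f' g' T' z.
Proof.
  intros Hle Ht HtT [Hz [Htz Hcons]] Hfin Hinf. split; [auto | split; [|split]].
  - intros i Hi _. eapply le_lt_trans; eauto.
  - intros i Hi HiT. destruct (trich i t) as [H|[H|H]].
    + destruct (Hcons i Hi H) as [H1 H2]. split; auto. intros Hg w k Hw Hiw HwT. apply H1; auto.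
    + subst i. split.
      * intros Hg w k Hw Hiw. exfalso. apply (le_not_lt _ _ (Hle w Hw)); auto.
      * intros Hg h k Hh Hhi. apply Hinf; auto.
    + exfalso. apply (le_not_lt _ _ (Hle i Hi)); auto.
  - intros p k [Hp [HpT Hpmax]] Hg Hk. assert (p = t) by (apply le_antisym; auto).
    subst; apply Hfin; auto.
Qed.

Lemma valid_ext f g t g' : zz ≺ f -> Valid f g -> Choice f g (f ⊕ oo) t ->
  (forall z, Choice f g (f ⊕ oo) z -> t ≼ z) -> (forall x, inS x f -> x ≺ t) ->
  (forall x, x <> t -> (inS x g' <-> inS x g)) ->
  (inS t g' <-> FinType (f ⊗ t) g' t) -> Valid (f ⊗ t) g'.
Proof.
  intros Hf V Ht Hmin HtF HG' HFt.
  assert (Htp : prime t) by apply Ht.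
  assert (HF' : forall x, inS x (f ⊗ t) <-> inS x f \/ x = t) by (intro; apply inS_mul; auto).
  assert (HP : PA f g (f ⊗ t) g' t).
  { intros x Hx. assert (x <> t) by (apply lt_neq; auto). split.
    rewrite HF'; tauto. intro. rewrite HG'; tauto. }
  assert (SP : forall x, inS x f -> (x ≺ f ⊕ oo <-> x ≺ t)).
  { intros x Hx. split; intro; auto. apply inS_lt; auto. }
  split.
  - intros x Hx. apply HF'. destruct (classic (x = t)); auto. left. apply (proj1 V). apply HG'; auto.
  - intros t0 Ht0. apply HF' in Ht0. destruct Ht0 as [Ht0|Ht0].
    + assert (Hlt : t0 ≺ t) by auto.
      assert (HP0 : PA f g (f ⊗ t) g' t0) by (eapply PA_mono; eauto; left; auto).
      destruct (proj2 V t0 Ht0) as [Ch [Mn Fn]].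
      split; [|split].
      * eapply Choice_PA; eauto.
      * intros z Hz. apply Mn. eapply Choice_PA; [apply PA_sym; eauto| eauto].
      * rewrite (HG' t0) by (apply lt_neq; auto). rewrite Fn. apply FinType_iff, ConsLe_iff; auto.
        rewrite HF'; tauto.
    + subst t0. split; [|split]; auto.
      * eapply Choice_PA; eauto. eapply Choice_SP; eauto.
      * intros z Hz. apply Hmin. eapply Choice_SP. 2: eapply Choice_PA; [apply PA_sym; eauto|eauto].
        intros x Hx; rewrite SP; tauto.
Qed.

Lemma extend f g : zz ≺ f -> Valid f g -> InfNext f g ->
  exists f' g' t, zz ≺ f' /\ Valid f' g' /\ InfNext f' g' /\ inS t f' /\ (forall x, inS x f -> x ≺ t).
Proof.
  intros Hf V I.
  destruct (I zz) as [z0 [_ Hz0]].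
  assert (HD : Def1 (fun z => Choice f g (f ⊕ oo) z)) by dfn.
  destruct (LNP _ HD z0 Hz0) as [t [Ht Hmin]].
  assert (Hmin' : forall z, Choice f g (f ⊕ oo) z -> t ≼ z).
  { intros z Hz. apply not_lt_le. intro H. apply (Hmin z H Hz). }
  assert (HtF : forall x, inS x f -> x ≺ t).
  { intros x Hx. apply (proj1 (proj2 Ht)); auto. apply inS_lt; auto. }
  assert (Htp : prime t) by apply Ht.
  assert (HtnF : ~ inS t f) by (intro H; apply (lt_irrefl t); auto).
  assert (Hf'pos : zz ≺ f ⊗ t).
  { eapply lt_le_trans; eauto. apply le_mul_pos. apply prime_pos; auto. }
  assert (HF' : forall x, inS x (f ⊗ t) <-> inS x f \/ x = t) by (intro; apply inS_mul; auto).
  assert (HF'le : forall x, inS x (f ⊗ t) -> x ≼ t).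
  { intros x Hx. apply HF' in Hx. destruct Hx as [Hx|Hx]. left; auto. right; auto. }
  assert (Ht' : inS t (f ⊗ t)) by (apply HF'; auto).
  assert (HtT' : t ≺ f ⊗ t ⊕ oo) by (apply inS_lt; auto).
  destruct (classic (FinType (f ⊗ t) g t)) as [Hfin|Hinf].
  -
    assert (HG' : forall x, x <> t -> (inS x (g ⊗ t) <-> inS x g)).
    { intros x Hx. rewrite inS_mul; auto. tauto. }
    assert (Htg' : inS t (g ⊗ t)) by (apply inS_mul; auto).
    assert (HFin' : FinType (f ⊗ t) (g ⊗ t) t).
    { rewrite <- (FinType_iff (f ⊗ t) g); auto. apply ConsLe_iff; [|tauto].
      intros x Hx. split. tauto. intro. rewrite HG'. tauto. apply lt_neq; auto. }
    exists (f ⊗ t), (g ⊗ t), t. split; [auto|split; [|split; [|split]]]; auto.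
    + eapply valid_ext; eauto; tauto.
    + destruct (Kappa_ex _ _ _ HFin') as [kap Hkap].
      intros b. destruct (proj1 Hkap b) as [z [Hbz [HRt Hcol]]]. exists z; split; auto.
      apply (next_from_Rt _ _ t); auto.
      all: try (intros _ k Hk; rewrite (Kappa_uniq _ _ _ _ _ Hk Hkap); auto).
      all: try (intro Hn; exfalso; auto).
  -
    assert (Htg : ~ inS t g) by (intro H; apply HtnF, (proj1 V); auto).
    exists (f ⊗ t), g, t. split; [auto|split; [|split; [|split]]]; auto.
    + eapply valid_ext; eauto; tauto.
    + assert (RtFrom : forall z, t ≺ z -> Choice f g (f ⊕ oo) z -> Rt (f ⊗ t) g t z).
      { intros z Htz Hz. destruct Hz as [Hzp [Habz [Hconsz Hkz]]].
        destruct Ht as [_ [_ [Hconst Hkt]]].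
        split; auto. split; auto. intros i Hi Hit.
        assert (HiF : inS i f).
        { apply HF' in Hi. destruct Hi as [Hi|Hi]; auto. subst; exfalso; eapply lt_irrefl; eauto. }
        assert (HiT : i ≺ f ⊕ oo) by (apply inS_lt; auto).
        destruct (Hconsz i HiF HiT) as [Zfin Zinf]. destruct (Hconst i HiF HiT) as [Tfin Tinf].
        split.
        - intros Hg w k Hw Hiw Hwt Hcol. apply HF' in Hw. destruct Hw as [HwF|Hwt'].
          + apply (Zfin Hg w k HwF Hiw (inS_lt _ _ Hf HwF) Hcol).
          + subst w.
            destruct (classic (exists w1, inS w1 f /\ i ≺ w1)) as [[w1 [Hw1 Hiw1]]|Hno].
            * destruct (col_ex i w1 Hiw1) as [k1 Hk1].
              assert (H1 : col i t k1) by (apply (Tfin Hg w1 k1 Hw1 Hiw1 (inS_lt _ _ Hf Hw1) Hk1)).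
              rewrite (col_uniq i t k k1 Hit Hcol H1).
              apply (Zfin Hg w1 k1 Hw1 Hiw1 (inS_lt _ _ Hf Hw1) Hk1).
            * assert (HPr : Pred f (f ⊕ oo) i).
              { split; auto. split; auto. intros p' Hp' _.
                destruct (trich p' i) as [H|[H|H]]; [left; auto|right; auto|].
                exfalso; apply Hno; eauto. }
              assert (HFi : FinType f g i) by (apply (proj2 V i HiF); auto).
              destruct (Kappa_ex _ _ _ HFi) as [kap Hkap].
              assert (H1 : col i t kap) by (apply (Hkt i kap HPr Hg Hkap)).
              rewrite (col_uniq i t k kap Hit Hcol H1). apply (Hkz i kap HPr Hg Hkap).
        - intros Hng h k Hh Hhi. apply Zinf; auto.
          apply HF' in Hh. destruct Hh as [Hh|Hh]; auto. subst h.
          exfalso. apply (lt_asym _ _ Hhi); auto. }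
      assert (HInfRt : forall b, exists z, b ≺ z /\ Rt (f ⊗ t) g t z).
      { intros b. destruct (I (b ⊕ t)) as [z [Hz1 Hz2]]. exists z.
        split. apply (le_lt_trans _ (b ⊕ t)); auto. apply le_add.
        apply RtFrom; auto. apply (le_lt_trans _ (b ⊕ t)); auto. apply le_add_l. }
      assert (BC : forall n, exists B, forall h, h ≺ n -> inS h f -> forall z k, B ≺ z ->
                 col h t k -> ~ (Rt (f ⊗ t) g t z /\ col t z k)).
      { intro n; induct n.
        - exists zz. intros h Hh. exfalso; eapply ax_lt0; eauto.
        - intros n [B HB]. destruct (classic (inS n f)) as [Hn|Hn].
          + destruct (col_ex n t (HtF n Hn)) as [kn Hkn].
            assert (Hnk : ~ InfK (f ⊗ t) g t kn) by (intro H; apply Hinf; exists kn; auto).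
            apply not_all_ex_not in Hnk. destruct Hnk as [bn Hbn].
            exists (B ⊕ bn). intros h Hh HhF z k Hz Hcol. apply ax_ltS in Hh. destruct Hh as [Hh|Hh].
            * apply (HB h Hh HhF z k); auto. apply (le_lt_trans _ (B ⊕ bn)); auto. apply le_add.
            * subst h. rewrite (col_uniq n t k kn (HtF n Hn) Hcol Hkn). intro H. apply Hbn.
              exists z. split; [|tauto]. apply (le_lt_trans _ (B ⊕ bn)); auto. apply le_add_l.
          + exists B. intros h Hh HhF. apply ax_ltS in Hh. destruct Hh as [Hh|Hh].
            * apply HB; auto.
            * subst; contradiction. }
      destruct (BC t) as [B HB].
      intros b. destruct (HInfRt (b ⊕ B)) as [z [Hz HRt]]. exists z. split.
      { apply (le_lt_trans _ (b ⊕ B)); auto. apply le_add. }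
      apply (next_from_Rt _ _ t); auto.
      * intro H; contradiction.
      * intros _ h k Hh Hht Hcol Hcolz.
        assert (HhF : inS h f).
        { apply HF' in Hh. destruct Hh as [Hh|Hh]; auto. subst; exfalso; eapply lt_irrefl; eauto. }
        apply (HB h (HtF h HhF) HhF z k); auto. apply (le_lt_trans _ (b ⊕ B)); auto. apply le_add_l.
Qed.

Lemma base_valid : Valid oo oo.
Proof. split. intros x H; exfalso; eapply inS_oo; eauto. intros t H; exfalso; eapply inS_oo; eauto. Qed.

Lemma base_inf : InfNext oo oo.
Proof. intro b. destruct (prime_gt b) as [p [Hp Hbp]]. exists p; split; auto.
  split; auto. split; [|split].
  - intros i H; exfalso; eapply inS_oo; eauto.
  - intros i H; exfalso; eapply inS_oo; eauto.
  - intros q k [H _]; exfalso; eapply inS_oo; eauto.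
Qed.

Lemma Jlem : forall n, exists f g, zz ≺ f /\ Valid f g /\ InfNext f g /\ exists t, inS t f /\ n ≼ t.
Proof. intro n; induct n.
  - destruct (extend oo oo zz_lt_oo base_valid base_inf) as [f [g [t [H1 [H2 [H3 [H4 H5]]]]]]].
    exists f, g; split; [auto|split; [auto|split; [auto|]]]. exists t; split; auto. apply zz_le.
  - intros n [f0 [g0 [H1 [H2 [H3 [t0 [H4 H5]]]]]]].
    destruct (extend f0 g0 H1 H2 H3) as [f [g [t [G1 [G2 [G3 [G4 G5]]]]]]].
    exists f, g; split; [auto|split; [auto|split; [auto|]]]. exists t; split; auto. apply lt_succ_le.
    eapply le_lt_trans; eauto.
Qed.

Lemma unbounded b : exists f g t, Valid f g /\ inS t f /\ b ≺ t.
Proof. destruct (Jlem (b ⊕ oo)) as [f [g [_ [V [_ [t [Ht Hle]]]]]]].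
  exists f, g, t; split; [auto|split; [auto|]]. eapply lt_le_trans; eauto. apply lt_succ. Qed.

Lemma EM_main : exists S, infinite_set A S /\ transitive_on A C S.
Proof.
  destruct (classic (forall b, exists t, b ≺ t /\ exists f g, Valid f g /\ inS t f /\ ~ inS t g)) as [Hi|Hi].
  - assert (HD : Def1 (fun t => exists f g, Valid f g /\ inS t f /\ ~ inS t g)) by dfn.
    destruct (CA1 _ HD) as [S HS]. exists S. split.
    + intro n. destruct (Hi n) as [t [Hnt Ht]]. exists t; split; auto. apply HS; auto.
    + intros x y z k Hx Hy Hz Hxy Hyz Hk1 Hk2. exfalso.
      apply HS in Hx. apply HS in Hy. apply HS in Hz.
      destruct Hx as [f1 [g1 [V1 [Hx1 _]]]]. destruct Hy as [f2 [g2 [V2 [Hy2 Hny2]]]].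
      destruct Hz as [f3 [g3 [V3 [Hz3 _]]]].
      destruct (proj1 (coherence f2 g2 f3 g3 V2 V3 y) Hy2) as [Hy3 Hg].
      { exists z; split; auto; left; auto. }
      destruct (proj1 (coherence f1 g1 f3 g3 V1 V3 x) Hx1) as [Hx3 _].
      { exists z; split; auto; left; eapply lt_trans; eauto. }
      destruct (proj2 V3 z Hz3) as [[_ [_ [Hcons _]]] _].
      destruct (Hcons y Hy3 Hyz) as [_ Hinf].
      apply (Hinf ltac:(tauto) x k Hx3 Hxy Hk1 Hk2).
  - apply not_all_ex_not in Hi. destruct Hi as [b0 Hb0].
    assert (HD : Def1 (fun t => (exists f g, Valid f g /\ inS t f /\ inS t g) /\ b0 ≺ t)) by dfn.
    destruct (CA1 _ HD) as [S HS]. exists S. split.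
    + intro n. destruct (unbounded (n ⊕ b0)) as [f [g [t [V [Ht Hlt]]]]].
      exists t. split. apply (le_lt_trans _ (n ⊕ b0)); auto. apply le_add.
      assert (Hb0t : b0 ≺ t) by (apply (le_lt_trans _ (n ⊕ b0)); auto; apply le_add_l).
      apply HS. split; auto. exists f, g. split; auto. split; auto.
      apply NNPP; intro Hng. apply Hb0. exists t. split; auto. exists f, g; auto.
    + intros x y z k Hx Hy Hz Hxy Hyz Hk1 Hk2.
      apply HS in Hx. apply HS in Hy. apply HS in Hz.
      destruct Hx as [[f1 [g1 [V1 [Hx1 Hxg1]]]] _]. destruct Hy as [[f2 [g2 [V2 [Hy2 _]]]] _].
      destruct Hz as [[f3 [g3 [V3 [Hz3 _]]]] _].
      destruct (proj1 (coherence f2 g2 f3 g3 V2 V3 y) Hy2) as [Hy3 _].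
      { exists z; split; auto; left; auto. }
      destruct (proj1 (coherence f1 g1 f3 g3 V1 V3 x) Hx1) as [Hx3 Hg].
      { exists z; split; auto; left; eapply lt_trans; eauto. }
      destruct (proj2 V3 z Hz3) as [[_ [_ [Hcons _]]] _].
      destruct (Hcons x Hx3 (lt_trans _ _ _ Hxy Hyz)) as [Hfin _].
      apply (Hfin ltac:(tauto) y k Hy3 Hxy Hyz Hk1).
Qed.

End Model.

Theorem mainTheorem20 :
  forall A : L2structure, ACA0_model A -> EM_infinity A.
Proof.
  intros A HA C HC. exact (EM_main A HA C HC).
Qed.
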